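(* Let $\alpha>0$ be fixed. There is a constant $C>0$ (depending only on $\alpha$) such that the following holds. Let $\mathcal{R}=\{P_1,\dots,P_n\}$ be a set of $n$ pairwise disjoint, connected, $\alpha$-fat simple polygons in the plane, let $0<\varepsilon<1$, let $T^*$ be an optimal tour of $\mathcal{R}$ with length $L^*$, let $W_0$ be the axis-aligned bounding box of $T^*$, let $\mathcal{R}_{W_0}\subseteq\mathcal{R}$ be the set of regions lying entirely inside $W_0$, and let $\lambda(\mathcal{R}_{W_0})$ be the sum of the diameters of the regions in $\mathcal{R}_{W_0}$. Then $L^*\ge C\cdot \lambda(\mathcal{R}_{W_0})/\log(n/\varepsilon)$.
   Context: A region $P$ is $\alpha$-fat if $\mathrm{area}(P)\ge \alpha\,[\mathrm{diam}(P)]^2$. A tour of $\mathcal{R}$ is a closed curve in the plane that intersects every region; an optimal tour is one of minimum Euclidean length. *)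

(* Defs.v *)
From HB Require Import structures.
From mathcomp Require Import all_boot all_order all_algebra.
From mathcomp Require Import all_classical all_reals all_analysis.
Set Implicit Arguments. Unset Strict Implicit. Unset Printing Implicit Defensive.
Import Order.TTheory GRing.Theory Num.Theory.
Import numFieldNormedType.Exports.
Local Open Scope classical_set_scope.
Local Open Scope ring_scope.

Section Plane.
Variable R : realType.
Definition pt := (R * R)%type.

Definition edist (p q : pt) : R :=
  Num.sqrt ((p.1 - q.1) ^+ 2 + (p.2 - q.2) ^+ 2).

Definition diam (P : set pt) : R :=
  sup [set edist p q | p in P & q in P].

Definition area (P : set pt) : \bar R :=
  ((@lebesgue_measure R) \x (@lebesgue_measure R))%E P.

Definition fat (alpha : R) (P : set pt) : Prop :=
  ((alpha * diam P ^+ 2)%:E <= area P)%E.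

Definition segment (a b : pt) : set pt :=
  [set ((1 - t) * a.1 + t * b.1, (1 - t) * a.2 + t * b.2) | t in `[0, 1]].

Definition vtx (v : seq pt) (i : nat) : pt := nth (0, 0) v (i %% size v)%N.
Definition edge (v : seq pt) (i : nat) : set pt :=
  segment (vtx v i) (vtx v i.+1).

Definition simple_chain (v : seq pt) : Prop :=
  (3 <= size v)%N /\ uniq v /\
  forall i j : nat, (i < size v)%N -> (j < size v)%N -> i <> j ->
    (if (j == (i.+1 %% size v)%N) then edge v i `&` edge v j = [set vtx v j]
     else if (i == (j.+1 %% size v)%N) then edge v i `&` edge v j = [set vtx v i]
     else edge v i `&` edge v j = set0).

Definition chain_image (v : seq pt) : set pt :=
  \bigcup_(i in [set i | (i < size v)%N]) edge v i.

Definition simple_polygon (P : set pt) : Prop :=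
  compact P /\ closure (interior P) = P /\
  exists v : seq pt, simple_chain v /\
    closure P `\` interior P = chain_image v.

Definition closed_curve (g : R -> pt) : Prop :=
  {within `[0, 1], continuous g} /\ g 0 = g 1.

Definition curve_image (g : R -> pt) : set pt := g @` `[0, 1].

(* Euclidean length: supremum of inscribed polygonal lengths over
   partitions 0 = t_0 <= t_1 <= ... <= t_k = 1 *)
Definition polyline_len (g : R -> pt) (s : seq R) : R :=
  \sum_(i < size s) edist (g (nth 0 (0 :: s) i)) (g (nth 0 s i)).

Definition curve_length (g : R -> pt) : \bar R :=
  ereal_sup [set (polyline_len g s)%:E | s in
     [set s : seq R | path <=%O (0 : R) s /\ last 0 s = 1]].

Definition is_tour (n : nat) (P : 'I_n -> set pt) (g : R -> pt) : Prop :=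
  closed_curve g /\ forall i, curve_image g `&` P i !=set0.

Definition optimal_tour (n : nat) (P : 'I_n -> set pt) (g : R -> pt) : Prop :=
  is_tour P g /\ forall g', is_tour P g' -> (curve_length g <= curve_length g')%E.

Definition bbox (g : R -> pt) : set pt :=
  [set p : pt |
     inf [set (g t).1 | t in `[0, 1]] <= p.1 <= sup [set (g t).1 | t in `[0, 1]] /\
     inf [set (g t).2 | t in `[0, 1]] <= p.2 <= sup [set (g t).2 | t in `[0, 1]]].

Definition lambda_in (n : nat) (P : 'I_n -> set pt) (W : set pt) : R :=
  \sum_(i < n | `[< P i `<=` W >]) diam (P i).

End Plane.

(* Main.v *)
From Pilot Require Import Defs.
From HB Require Import structures.
From mathcomp Require Import all_boot all_order all_algebra.
From mathcomp Require Import all_classical all_reals all_analysis.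
Import Order.TTheory GRing.Theory Num.Theory.
Import numFieldNormedType.Exports.
Local Open Scope classical_set_scope.
Local Open Scope ring_scope.
From mathcomp Require Import ring lra.

Module Helpers.
Import Pilot.Defs.
Set Implicit Arguments. Unset Strict Implicit. Unset Printing Implicit Defensive.

Section Meas.
Variable R : realType.

Definition rect (a b c e : R) : set (R * R) := `[a, b] `*` `[c, e].

Lemma rect_meas a b c e : measurable (rect a b c e).
Proof. by apply: measurableX. Qed.

Lemma open_meas (U : set (R * R)) : open U -> measurable U.
Proof.
move=> oU.
pose F (a b c e : rat) : set (R * R) :=
  if pselect (rect (ratr a) (ratr b) (ratr c) (ratr e) `<=` U)
  then rect (ratr a) (ratr b) (ratr c) (ratr e) else set0.
have -> : U = \bigcup_a \bigcup_b \bigcup_c \bigcup_e F a b c e.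
  apply/seteqP; split; last first.
    move=> p [a _ [b _ [c _ [e _]]]]; rewrite /F.
    by case: pselect => // H /H.
  move=> p Up.
  have : nbhs p U by move: oU; rewrite openE => /(_ p Up).
  move=> /nbhs_ballP [r /= r0 Hb].
  have [a Ha] := @rat_in_itvoo R (p.1 - r) p.1 ltac:(rewrite ltrBlDr ltrDl //).
  have [b Hb'] := @rat_in_itvoo R p.1 (p.1 + r) ltac:(rewrite ltrDl //).
  have [c Hc] := @rat_in_itvoo R (p.2 - r) p.2 ltac:(rewrite ltrBlDr ltrDl //).
  have [e He] := @rat_in_itvoo R p.2 (p.2 + r) ltac:(rewrite ltrDl //).
  move: Ha Hb' Hc He; rewrite !in_itv /= => /andP[a1 a2] /andP[b1 b2] /andP[c1 c2] /andP[e1 e2].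
  exists a => //; exists b => //; exists c => //; exists e => //.
  rewrite /F; case: pselect => H; last first.
    apply: H => q [/=]; rewrite !in_itv /= => /andP[q1 q2] /andP[q3 q4].
    apply: Hb; split => /=; rewrite /ball /= ltr_norml; apply/andP; split; lra.
  by split => /=; rewrite in_itv /= ?(ltW a2) ?(ltW b1) ?(ltW c2) ?(ltW e1).
have H1 := @bigcupT_measurable_rat _ _ (fun a => \bigcup_b \bigcup_c \bigcup_e F a b c e); apply: H1 => a.
have H1 := @bigcupT_measurable_rat _ _ (fun b => \bigcup_c \bigcup_e F a b c e); apply: H1 => b.
have H1 := @bigcupT_measurable_rat _ _ (fun c => \bigcup_e F a b c e); apply: H1 => c.
have H1 := @bigcupT_measurable_rat _ _ (fun e => F a b c e); apply: H1 => e.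
rewrite /F; destruct (pselect _) => /=; [exact: rect_meas|exact: measurable0].
Qed.

Lemma compact_meas (A : set (R * R)) : compact A -> measurable A.
Proof.
move=> cA; have cl : closed A by apply: compact_closed => //; exact: norm_hausdorff.
rewrite -[A]setCK; apply: measurableC; apply: open_meas.
by rewrite openC.
Qed.
End Meas.

Section Dist.
Variable R : realType.
Implicit Types p q : pt R.

Lemma edist_ge0 p q : 0 <= edist p q.
Proof. exact: sqrtr_ge0. Qed.

Lemma edist_sym p q : edist p q = edist q p.
Proof. by rewrite /edist -sqrrN opprB -(sqrrN (p.2 - q.2)) opprB. Qed.

Lemma edist_xx p : edist p p = 0.
Proof. by rewrite /edist !subrr expr0n /= addr0 sqrtr0. Qed.

Lemma edist_ge1 p q : `|p.1 - q.1| <= edist p q.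
Proof.
rewrite /edist -(sqrtr_sqr (p.1 - q.1)) ler_sqrt ?addr_ge0 ?sqr_ge0 //.
by rewrite lerDl sqr_ge0.
Qed.

Lemma edist_ge2 p q : `|p.2 - q.2| <= edist p q.
Proof.
rewrite /edist -(sqrtr_sqr (p.2 - q.2)) ler_sqrt ?addr_ge0 ?sqr_ge0 //.
by rewrite lerDr sqr_ge0.
Qed.

Lemma edist_le p q : edist p q <= `|p.1 - q.1| + `|p.2 - q.2|.
Proof.
have ha := normr_ge0 (p.1-q.1); have hb := normr_ge0 (p.2-q.2).
rewrite /edist -(real_normK (num_real (p.1-q.1))) -(real_normK (num_real (p.2 - q.2))).
rewrite -(ger0_norm (addr_ge0 ha hb)) -[X in _ <= X]sqrtr_sqr ler_sqrt; nra.
Qed.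

End Dist.

Section Diam.
Variable R : realType.
Implicit Types p q : pt R.

Lemma compact_coord_bound (P : set (pt R)) : compact P ->
  exists M : R, 0 <= M /\ forall p, P p -> `|p.1| <= M /\ `|p.2| <= M.
Proof.
move=> /compact_bounded [N [_ HN]].
exists (Num.max 0 (N + 1)); split; first by rewrite le_max lexx.
move=> p Pp; have := HN (Num.max 0 (N + 1)) _ p Pp.
rewrite /= => H; have {}H := H ltac:(rewrite lt_max; apply/orP; right; rewrite ltrDl ltr01 //).
move: H; have -> : `|p| = Num.max `|p.1| `|p.2| by [].
by rewrite ge_max => /andP.
Qed.

Definition dset (P : set (pt R)) := [set edist p q | p in P & q in P].

Lemma dset_ub (P : set (pt R)) : compact P ->
  exists B : R, forall p q, P p -> P q -> edist p q <= B.
Proof.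
move=> /compact_coord_bound [M [M0 HM]]; exists (4 * M) => p q Pp Pq.
apply: le_trans (edist_le p q) _.
have [h1 h2] := HM p Pp; have [h3 h4] := HM q Pq.
have e1 := ler_normB p.1 q.1; have e2 := ler_normB p.2 q.2.
lra.
Qed.

Lemma diam_ub (P : set (pt R)) p q : compact P -> P p -> P q ->
  edist p q <= diam P.
Proof.
move=> cP Pp Pq; have [B HB] := dset_ub cP.
apply: sup_upper_bound; last by exists p => //; exists q.
split; first by exists (edist p q); exists p => //; exists q.
by exists B => _ [a Pa [b Pb <-]]; apply: HB.
Qed.

Lemma diam_ge0 (P : set (pt R)) p : compact P -> P p -> 0 <= diam P.
Proof. by move=> cP Pp; rewrite -(edist_xx p); apply: diam_ub. Qed.

Lemma diam_le (P : set (pt R)) c : 0 <= c ->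
  (forall p q, P p -> P q -> edist p q <= c) -> diam P <= c.
Proof.
move=> c0 H; rewrite /diam -/(dset P).
have [->|ne] := eqVneq (dset P) set0.
  by rewrite sup0.
apply: ge_sup; first by apply/set0P.
by move=> _ [a Pa [b Pb <-]]; apply: H.
Qed.

End Diam.

Section Curve.
Variable R : realType.
Variable g : R -> pt R.

Fixpoint plr (a : R) (s : seq R) : R :=
  if s is x :: s' then edist (g a) (g x) + plr x s' else 0.

Lemma polyline_plr_gen a s :
  \sum_(i < size s) edist (g (nth 0 (a :: s) i)) (g (nth 0 s i)) = plr a s.
Proof.
elim: s a => [|x s IH] a /=; first by rewrite big_ord0.
by rewrite big_ord_recl /= IH.
Qed.

Lemma polyline_plr s : polyline_len g s = plr 0 s.
Proof. exact: polyline_plr_gen. Qed.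

Lemma plr_ge0 a s : 0 <= plr a s.
Proof. by elim: s a => [|x s IH] a //=; rewrite addr_ge0 ?edist_ge0. Qed.

Lemma plr_rcons a s b : plr a (rcons s b) = plr a s + edist (g (last a s)) (g b).
Proof. by elim: s a => [|x s IH] a /=; rewrite ?IH ?addr0 ?add0r ?addrA. Qed.

Lemma plr_sep r a s : path (fun x y => r <= edist (g x) (g y)) a s ->
  (size s)%:R * r <= plr a s.
Proof.
elim: s a => [|x s IH] a /=; first by rewrite mul0r.
move=> /andP[h1 h2]; have := IH _ h2; rewrite mulrSr mulrDl mul1r.
move: h1; rewrite -/(size s) => h1 h3; lra.
Qed.

Variable L : R.
Hypothesis HL : curve_length g = L%:E.

Lemma poly_le s : path <=%O (0 : R) s -> last 0 s = 1 -> polyline_len g s <= L.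
Proof.
move=> ps ls; rewrite -lee_fin -HL; apply: ereal_sup_ubound.
by exists s.
Qed.

Lemma pair_le u v : 0 <= u <= 1 -> 0 <= v <= 1 -> edist (g u) (g v) <= L.
Proof.
wlog uv : u v / u <= v.
  move=> H hu hv; have [h|h] := lerP u v; first exact: H.
  by rewrite edist_sym; apply: H => //; apply: ltW.
move=> /andP[u0 u1] /andP[v0 v1].
have := poly_le (s := [:: u; v; 1]) ltac:(by rewrite /= u0 uv v1) erefl.
rewrite polyline_plr /= addr0.
have := edist_ge0 (g 0) (g u); have := edist_ge0 (g v) (g 1); lra.
Qed.

Lemma L_ge0 : 0 <= L.
Proof.
apply: le_trans (pair_le (u := 0) (v := 0) _ _); rewrite ?edist_ge0 //=;
  by rewrite lexx ler01.
Qed.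

End Curve.

Section Sep.
Variable R : realType.
Variable g : R -> pt R.
Variable L : R.
Hypothesis HL : curve_length g = L%:E.
Variable r : R.
Hypothesis r0 : 0 < r.

Definition sepset (S : seq R) :=
  uniq S /\ (forall s, s \in S -> 0 <= s <= 1) /\
  (forall a b, a \in S -> b \in S -> a != b -> r <= edist (g a) (g b)).

Lemma sep_path (S l : seq R) x : sepset S -> uniq (x :: l) -> {subset x :: l <= S} ->
  path (fun a b => r <= edist (g a) (g b)) x l.
Proof.
move=> [_ [_ HS]]; elim: l x => [|y l IH] x //= /andP[xl ul] sub.
apply/andP; split.
  apply: HS; rewrite ?sub ?inE ?eqxx ?orbT //.
  by apply: contraNneq xl => ->; rewrite inE eqxx.
by apply: IH => // z zin; apply: sub; rewrite inE zin orbT.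
Qed.

Lemma sep_size S : sepset S -> ((size S)%:R - 1) * r <= L.
Proof.
move=> sS; have L0 := L_ge0 HL.
case E : (sort <=%O S) => [|x xs].
  move: E => /(congr1 size); rewrite size_sort /= => ->; rewrite mulr0n sub0r mulN1r; apply: le_trans L0; rewrite oppr_le0; exact: ltW.
have sS' := sS; case: sS' => [uS [bS _]].
have mem : forall z, z \in x :: xs -> z \in S by move=> z; rewrite -E mem_sort.
have hs : size S = (size xs).+1 by have := congr1 size E; rewrite size_sort.
have pth := sep_path sS (l := xs) (x := x) ltac:(by rewrite -E sort_uniq) mem.
have P0 : path <=%O (0:R) (rcons (x :: xs) 1).
  rewrite -E rcons_path; apply/andP; split.
    rewrite path_sortedE; last exact: le_trans.
    apply/andP; split; last exact: sort_sorted le_total S.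
    by apply/allP => z; rewrite mem_sort => /bS /andP[].
  have : last 0 (sort <=%O S) \in 0 :: sort <=%O S by exact: mem_last.
  rewrite inE => /orP[/eqP -> //|]; rewrite mem_sort => /bS /andP[] //.
have := poly_le HL P0 (last_rcons _ _ _).
rewrite polyline_plr plr_rcons /=.
have := plr_sep pth; have := edist_ge0 (g 0) (g x).
have := edist_ge0 (g (last x xs)) (g 1).
rewrite hs -addn1 natrD; lra.
Qed.

Lemma sep_cover : exists S : seq R,
  (forall s, s \in S -> 0 <= s <= 1) /\ ((size S)%:R - 1) * r <= L /\
  forall t, 0 <= t <= 1 -> exists2 s, s \in S & edist (g t) (g s) < r.
Proof.
pose good k := `[< exists S, size S = k /\ sepset S >].
have ex0 : exists k, good k.
  by exists 0%N; apply/asboolP; exists [::]; split => //; split => //; split.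
have ub : forall k, good k -> (k <= (Num.trunc (L / r)).+1)%N.
  move=> k /asboolP [S [<- sS]]; have := sep_size sS => h.
  have h2 : (size S)%:R - 1 <= L / r by rewrite ler_pdivlMr.
  have h3 := truncnS_gt (L / r).
  have : (size S)%:R < ((Num.trunc (L / r)).+2)%:R :> R.
    rewrite -addn1 natrD; lra.
  by rewrite ltr_nat ltnS.
case: (ex_maxnP ex0 ub) => k /asboolP [S [sz sS]] kmax.
exists S; split; first by case: sS => _ [].
split; first exact: sep_size sS.
move=> t t01; apply: contrapT => Hn.
have far : forall s, s \in S -> r <= edist (g t) (g s).
  move=> s sS'; rewrite leNgt; apply/negP => lt; apply: Hn; by exists s.
have tS : t \notin S.
  apply/negP => /far; rewrite edist_xx => h; by move: (lt_le_trans r0 h); rewrite ltxx.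
have : good k.+1.
  apply/asboolP; exists (t :: S); split; first by rewrite /= sz.
  case: sS => uS [bS sepS]; split; first by rewrite /= tS uS.
  split; first by move=> s; rewrite inE => /orP[/eqP ->|/bS].
  move=> a b; rewrite !inE => /orP[/eqP ->|aS] /orP[/eqP ->|bS'] ab.
  - by rewrite eqxx in ab.
  - exact: far.
  - by rewrite edist_sym; apply: far.
  - exact: sepS.
by move/kmax; rewrite ltnn.
Qed.

End Sep.

Section BBox.
Variable R : realType.

Lemma supinf_gap (f : R -> R) (L : R) :
  (forall u v, 0 <= u <= 1 -> 0 <= v <= 1 -> `|f u - f v| <= L) ->
  forall x y, inf [set f t | t in `[0, 1]] <= x <= sup [set f t | t in `[0, 1]] ->
  inf [set f t | t in `[0, 1]] <= y <= sup [set f t | t in `[0, 1]] ->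
  `|x - y| <= L.
Proof.
move=> H x y /andP[x1 x2] /andP[y1 y2].
set X := [set f t | t in `[0, 1]].
have ne : X !=set0 by exists (f 0); exists 0 => //=; rewrite in_itv /= lexx ler01.
have key : sup X <= inf X + L.
  apply: ge_sup => // _ [u u01 <-].
  rewrite -lerBlDr; apply: lb_le_inf => // _ [v v01 <-].
  move: u01 v01; rewrite /= !in_itv /= => u01 v01.
  have := H u v u01 v01; rewrite ler_norml => /andP[_ h]; lra.
rewrite ler_norml; apply/andP; split; lra.
Qed.

Variable g : R -> pt R.
Variable L : R.
Hypothesis HL : curve_length g = L%:E.

Lemma bbox_coord p q : bbox g p -> bbox g q ->
  `|p.1 - q.1| <= L /\ `|p.2 - q.2| <= L.
Proof.
move=> [hp1 hp2] [hq1 hq2]; split.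
  apply: (supinf_gap (f := fun t => (g t).1)) => // u v u01 v01.
  exact: le_trans (edist_ge1 _ _) (pair_le HL u01 v01).
apply: (supinf_gap (f := fun t => (g t).2)) => // u v u01 v01.
exact: le_trans (edist_ge2 _ _) (pair_le HL u01 v01).
Qed.

Lemma bbox_diam (P : set (pt R)) : P `<=` bbox g -> diam P <= 2 * L.
Proof.
move=> sub; have L0 := L_ge0 HL.
apply: diam_le; first lra.
move=> p q Pp Pq; have [h1 h2] := bbox_coord (sub _ Pp) (sub _ Pq).
have := edist_le p q; lra.
Qed.

End BBox.

Section Area.
Variable R : realType.

Lemma area_ge0 (A : set (pt R)) : (0 <= area A)%E.
Proof. exact: measure_ge0. Qed.

Lemma area_rect (a b c e : R) : a <= b -> c <= e ->
  area (rect a b c e) = ((b - a) * (e - c))%:E.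
Proof.
move=> ab ce; rewrite /area /rect product_measure1E //.
transitivity (lebesgue_measure (`[a, b]%classic : set R) *
  lebesgue_measure (`[c, e]%classic : set R))%E; first by [].
rewrite !lebesgue_measure_itv /= !lte_fin.
have [ab'|ab'] := ltP a b; have [ce'|ce'] := ltP c e;
  rewrite -?EFinD -?EFinM ?mule0 ?mul0e; congr (_%:E).
all: try (have -> : b = a by apply/eqP; rewrite eq_le ab ab').
all: try (have -> : e = c by apply/eqP; rewrite eq_le ce ce').
all: by rewrite ?subrr ?mulr0 ?mul0r.
Qed.

Notation mprod := (measurableTypeR R * measurableTypeR R)%type.

Lemma bigU_mem (I : eqType) (l : seq I) (F : I -> set (pt R)) p :
  (\big[setU/set0]_(i <- l) F i) p -> exists2 i, i \in l & F i p.
Proof.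
elim: l => [|x l IH]; first by rewrite big_nil.
rewrite big_cons => -[Fx|/IH [i il Fi]]; first by exists x; rewrite ?inE ?eqxx.
by exists i; rewrite // inE il orbT.
Qed.

Lemma bigU_meas (I : eqType) (l : seq I) (F : I -> set (pt R)) :
  (forall i, @measurable _ mprod (F i)) ->
  @measurable _ mprod (\big[setU/set0]_(i <- l) F i).
Proof.
move=> mF; elim: l => [|x l IH]; first by rewrite big_nil; exact: measurable0.
by rewrite big_cons; apply: measurableU.
Qed.

Lemma area_add (I : eqType) (l : seq I) (F : I -> set (pt R)) : uniq l ->
  (forall i, @measurable _ mprod (F i)) ->
  (forall i j, i != j -> F i `&` F j = set0) ->
  \sum_(i <- l) area (F i) = area (\big[setU/set0]_(i <- l) F i).
Proof.
move=> + mF dF; elim: l => [|x l IH]; first by rewrite !big_nil /area measure0.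
move=> /= /andP[xl ul]; rewrite !big_cons IH //.
rewrite /area measureU //; first exact: bigU_meas.
apply/seteqP; split => // p [Fx /bigU_mem [i il Fi]].
have xi : x != i by apply: contraNneq xl => ->.
by have := dF _ _ xi; move/seteqP => [+ _] => /(_ p (conj Fx Fi)).
Qed.

Lemma area_sum_le (I : finType) (J : pred I) (F : I -> set (pt R)) (B : set (pt R)) :
  @measurable _ mprod B ->
  (forall i, @measurable _ mprod (F i)) ->
  (forall i j, i != j -> F i `&` F j = set0) ->
  (forall i, J i -> F i `<=` B) ->
  (\sum_(i | J i) area (F i) <= area B)%E.
Proof.
move=> mB mF dF sub; rewrite -big_filter area_add //; last first.
  by rewrite filter_uniq // index_enum_uniq.
rewrite /area le_measure ?inE //; first exact: bigU_meas.
move=> p /bigU_mem [i]; rewrite mem_filter => /andP[Ji _]; exact: sub.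
Qed.

End Area.

Section Pack.
Variable R : realType.
Notation mprod := (measurableTypeR R * measurableTypeR R)%type.
Variable alpha : R.
Hypothesis alpha0 : 0 < alpha.
Variable n : nat.
Variable P : 'I_n -> set (pt R).
Hypothesis cP : forall i, compact (P i).
Hypothesis fP : forall i, fat alpha (P i).
Hypothesis dP : forall i j, i != j -> P i `&` P j = set0.
Variable g : R -> pt R.
Variable d : R.
Hypothesis d0 : 0 < d.
Variable S : seq R.
Hypothesis HS : forall t, 0 <= t <= 1 -> exists2 s, s \in S & edist (g t) (g s) < d.

Definition box (c : pt R) := rect (c.1 - 3 * d) (c.1 + 3 * d) (c.2 - 3 * d) (c.2 + 3 * d).

Lemma sum_const_seq (T : eqType) (l : seq T) (c : R) : \sum_(s <- l) c = (size l)%:R * c.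
Proof.
elim: l => [|x l IH]; first by rewrite big_nil mul0r.
by rewrite big_cons IH /= mulrSr mulrDl mul1r addrC.
Qed.

Lemma le_sum_mem (T : eqType) (l : seq T) (F : T -> \bar R) x :
  (forall y, 0 <= F y)%E -> x \in l -> (F x <= \sum_(y <- l) F y)%E.
Proof.
move=> F0; elim: l => [|y l IH] //; rewrite inE big_cons => /orP[/eqP ->|xl].
  by rewrite leeDl // sume_ge0.
by apply: le_trans (IH xl) _; rewrite leeDr.
Qed.

Lemma pack (J : pred 'I_n) :
  (forall i, J i -> (exists t, 0 <= t <= 1 /\ P i (g t)) /\ d < diam (P i) <= 2 * d) ->
  \sum_(i | J i) diam (P i) <= 36 * d * (size S)%:R / alpha.
Proof.
move=> HJ.
have inbox : forall i, J i -> exists2 s, s \in S & P i `<=` box (g s).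
  move=> i Ji; have [[t [t01 Pt]] /andP[_ dle]] := HJ i Ji.
  have [s sS ds] := HS t01; exists s => // p Pp.
  have hd := diam_ub (@cP i) Pp Pt.
  have h1 := edist_ge1 p (g t); have h2 := edist_ge2 p (g t).
  have h3 := edist_ge1 (g t) (g s); have h4 := edist_ge2 (g t) (g s).
  have h5 := ler_normB (p.1 - (g t).1) ((g s).1 - (g t).1).
  have h6 := ler_normB (p.2 - (g t).2) ((g s).2 - (g t).2).
  have e1 : `|p.1 - (g s).1| <= 3 * d.
    have -> : p.1 - (g s).1 = (p.1 - (g t).1) - ((g s).1 - (g t).1) by ring.
    rewrite (distrC (g s).1) in h5; lra.
  have e2 : `|p.2 - (g s).2| <= 3 * d.
    have -> : p.2 - (g s).2 = (p.2 - (g t).2) - ((g s).2 - (g t).2) by ring.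
    rewrite (distrC (g s).2) in h6; lra.
  move: e1 e2; rewrite !ler_norml => /andP[e1 e1'] /andP[e2 e2'].
  by split; rewrite /= in_itv /=; apply/andP; split; lra.
have E1 : (\sum_(i | J i) (alpha * diam (P i) ^+ 2)%:E <= \sum_(i | J i) area (P i))%E.
  by apply: lee_sum => i _; exact: fP.
have E2 : (\sum_(i | J i) area (P i) <=
    \sum_(s <- S) \sum_(i | J i && `[< P i `<=` box (g s) >]) area (P i))%E.
  under [X in (_ <= X)%E]eq_bigr do rewrite big_mkcondr /=.
  rewrite exchange_big /=; apply: lee_sum => i Ji.
  have [s sS sub] := inbox i Ji.
  apply: le_trans (le_sum_mem (x := s) _ sS); last first.
    by move=> y; case: ifP => // _; exact: area_ge0.
  by rewrite /= asboolT.
have E3 : (\sum_(s <- S) \sum_(i | J i && `[< P i `<=` box (g s) >]) area (P i) <=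
    \sum_(s <- S) ((6 * d) * (6 * d))%:E)%E.
  apply: lee_sum => s _.
  have -> : ((6 * d) * (6 * d))%:E = area (box (g s)).
    rewrite /box area_rect; last 2 first.
    - have := ltW d0; lra.
    - have := ltW d0; lra.
    congr (_%:E); ring.
  apply: area_sum_le.
  - exact: rect_meas.
  - move=> i; exact: compact_meas (@cP i).
  - exact: dP.
  - by move=> i /andP[_ /asboolP].
have E := le_trans E1 (le_trans E2 E3).
move: E; rewrite !sumEFin lee_fin sum_const_seq => E.
have ad0 : 0 < alpha * d by rewrite mulr_gt0.
apply: (@le_trans _ _ (\sum_(i | J i) (alpha * diam (P i) ^+ 2 / (alpha * d)))).
  apply: ler_sum => i Ji; have [_ /andP[h1 h2]] := HJ i Ji.
  rewrite ler_pdivlMr //.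
  have hD : 0 < diam (P i) := lt_trans d0 h1.
  have h1p : 0 <= diam (P i) - d by rewrite subr_ge0 ltW.
  have := mulr_ge0 (ltW (mulr_gt0 alpha0 hD)) h1p.
  move=> h; rewrite expr2; nra.
rewrite -big_distrl /= ler_pdivrMr //.
apply: le_trans E _.
rewrite le_eqVlt; apply/orP; left; apply/eqP.
field; exact: lt0r_neq0.
Qed.
End Pack.

Section Decomp.
Variable R : realType.

Lemma half_pow (M : R) k : M / 2 ^+ k.+1 = (M / 2 ^+ k) / 2.
Proof. by rewrite exprSr invfM mulrA. Qed.

Lemma pow_pos k : 0 < (2 : R) ^+ k.
Proof. by rewrite exprn_gt0. Qed.

Lemma decomp (M x : R) (K : nat) : 0 <= x <= M -> 0 < M ->
  x <= (if x <= M / 2 ^+ K then x else 0) +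
       \sum_(k < K) (if (M / 2 ^+ k.+1 < x) && (x <= M / 2 ^+ k) then x else 0).
Proof.
move=> /andP[x0 xM] M0; elim: K => [|K IH].
  by rewrite big_ord0 expr0 divr1 xM addr0.
rewrite big_ord_recr /=; apply: le_trans IH _.
rewrite [X in _ <= X]addrCA [X in X <= _]addrC lerD2l half_pow.
have y0 : 0 < M / 2 ^+ K by rewrite divr_gt0 ?pow_pos.
set y := M / 2 ^+ K in y0 *.
have [h1|h1] := lerP x y; have [h2|h2] := lerP x (y/2); have [h3|h3] := ltP (y/2) x;
  rewrite /= ?andbT ?andbF ?addr0 ?add0r; lra.
Qed.

End Decomp.

Section Bound.
Variable R : realType.
Variable alpha : R.
Hypothesis alpha0 : 0 < alpha.
Variable n : nat.
Variable P : 'I_n -> set (pt R).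
Hypothesis cP : forall i, compact (P i).
Hypothesis fP : forall i, fat alpha (P i).
Hypothesis dP : forall i j, i != j -> P i `&` P j = set0.
Variable g : R -> pt R.
Hypothesis touch : forall i, exists t, 0 <= t <= 1 /\ P i (g t).
Variable L : R.
Hypothesis HL : curve_length g = L%:E.
Hypothesis L0 : 0 < L.

Lemma lambda_bound (K : nat) : (n <= 2 ^ K)%N ->
  lambda_in P (bbox g) <= 2 * L + K%:R * (72 * L / alpha).
Proof.
move=> nK; have L0' := L0; have a0 := alpha0.
pose M := 2 * L.
have M0 : 0 < M.
  rewrite /M; lra.
pose x i := if `[< P i `<=` bbox g >] then diam (P i) else 0.
have hx : forall i, 0 <= x i <= M.
  move=> i; rewrite /x; case: ifP => [/asboolP W|_]; last by rewrite lexx ltW.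
  have [t [_ Pt]] := touch i.
  by rewrite (diam_ge0 (@cP i) Pt) (bbox_diam HL W).
have -> : lambda_in P (bbox g) = \sum_(i < n) x i by rewrite /lambda_in big_mkcond.
apply: le_trans (ler_sum _ (fun i _ => decomp K (hx i) M0)) _.
rewrite big_split /= exchange_big /=.
apply: lerD.
  apply: le_trans (ler_sum (G := fun _ => M / 2 ^+ K) _ _) _.
    move=> i _; case: ifP => // _; rewrite divr_ge0 ?ltW ?pow_pos //.
  rewrite sumr_const card_ord -[_ *+ n]mulr_natr mulrAC ler_pdivrMr ?pow_pos //.
  apply: ler_wpM2l; first exact: ltW.
  by rewrite -natrX ler_nat.
apply: le_trans (ler_sum (G := fun _ => 72 * L / alpha) _ _) _; last first.
  by rewrite sumr_const card_ord -[_ *+ K]mulr_natl.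
move=> k _.
pose d := M / 2 ^+ k.+1.
have d0 : 0 < d by rewrite divr_gt0 ?pow_pos.
have dL : d <= L.
  have e1 : 1 <= (2:R) ^+ k by rewrite exprn_ege1 // ler1n.
  rewrite /d ler_pdivrMr ?pow_pos // exprS /M; nra.
pose J i := `[< P i `<=` bbox g >] && (d < diam (P i)) && (diam (P i) <= M / 2 ^+ k).
have -> : \sum_(i < n) (if (M / 2 ^+ k.+1 < x i) && (x i <= M / 2 ^+ k) then x i else 0)
    = \sum_(i < n | J i) diam (P i).
  rewrite [RHS]big_mkcond /=; apply: eq_bigr => i _; rewrite /J /x.
  have [W|W] := boolP `[< P i `<=` bbox g >]; rewrite /= -/d //.
  by case: ifP.
have [S [_ [Ssz HS]]] := sep_cover HL d0.
have HJ : forall i, J i -> (exists t, 0 <= t <= 1 /\ P i (g t)) /\ d < diam (P i) <= 2 * d.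
  move=> i /andP[/andP[_ h1] h2]; split; first exact: touch.
  have -> : 2 * d = M / 2 ^+ k by rewrite /d half_pow mulrC divfK // pnatr_eq0.
  by rewrite h1 h2.
apply: le_trans (pack alpha0 cP fP dP d0 HS HJ) _.
apply: ler_wpM2r; first by rewrite invr_ge0 ltW.
have : d * (size S)%:R <= 2 * L by move: Ssz; lra.
move=> h; nra.
Qed.

End Bound.

Section Final.
Variable R : realType.

Lemma touch_of_tour n (P : 'I_n -> set (pt R)) g : is_tour P g ->
  forall i, exists t, 0 <= t <= 1 /\ P i (g t).
Proof.
move=> [_ H] i; have [p [[t t01 <-] Pp]] := H i.
by exists t; split => //; move: t01; rewrite /= in_itv.
Qed.

Lemma const_len (p : pt R) : (curve_length (fun _ : R => p) <= 0)%E.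
Proof.
apply: ge_ereal_sup => _ [s _ <-]; rewrite lee_fin /polyline_len.
by rewrite big1 // => i _; rewrite edist_xx.
Qed.

Lemma lambda_le0 n (P : 'I_n -> set (pt R)) g L :
  curve_length g = L%:E -> L <= 0 -> lambda_in P (bbox g) <= 0.
Proof.
move=> HL L0; rewrite /lambda_in.
apply: sumr_le0 => i /asboolP W; apply: le_trans (bbox_diam HL W) _; lra.
Qed.

End Final.

End Helpers.
Import Helpers.

Theorem lemma2p6 (R : realType) (alpha : R) (halpha : 0 < alpha) :
  exists C : R, 0 < C /\
  forall (n : nat) (P : 'I_n -> set (pt R)) (eps : R),
    (forall i, simple_polygon (P i)) ->
    (forall i, connected (P i)) ->
    (forall i, fat alpha (P i)) ->
    (forall i j, i != j -> P i `&` P j = set0) ->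
    0 < eps < 1 ->
    forall T : R -> pt R, optimal_tour P T ->
      ((C * lambda_in P (bbox T) / ln (n%:R / eps))%:E <= curve_length T)%E.
Proof.
have l2 : 0 < ln (2 : R) by apply: ln_gt0; rewrite ltr1n.
have a0 : 0 < alpha^-1 by rewrite invr_gt0.
have den : 0 < 2 + 144 * alpha^-1 by rewrite addr_gt0 // mulr_gt0.
exists (ln 2 / (2 + 144 * alpha^-1)); split; first by rewrite divr_gt0.
move=> n P eps simp _ fatP disj /andP[e0 e1] T opt.
have cP : forall i, compact (P i) by move=> i; case: (simp i).
have touch := touch_of_tour opt.1.
case Hc : (curve_length T) => [L| |]; last first.
- have : ((polyline_len T [:: 1])%:E <= curve_length T)%E.
    by apply: ereal_sup_ubound; exists [:: 1] => //=; rewrite ler01.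
  by rewrite Hc leeNy_eq.
- by rewrite leey.
rewrite lee_fin; have L0 := L_ge0 Hc.
have [n0|n1] := posnP n.
  subst n; by rewrite /lambda_in big_ord0 mulr0 mul0r.
have ell : 0 < ln (n%:R / eps).
  apply: ln_gt0; rewrite ltr_pdivlMr // mul1r.
  apply: lt_le_trans e1 _; by rewrite ler1n.
set lam := lambda_in P (bbox T).
rewrite ler_pdivrMr //.
have Cl : forall x, x <= 0 -> ln 2 / (2 + 144 * alpha^-1) * x <= L * ln (n%:R / eps).
  move=> x x0; apply: le_trans (_ : 0 <= _); last by rewrite mulr_ge0 // ltW.
  by rewrite mulr_ge0_le0 // divr_ge0 // ltW.
have [L00|Lpos] : L = 0 \/ 0 < L by move: L0; rewrite le_eqVlt => /orP[/eqP <-|]; [left|right].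
  by apply: Cl; apply: (lambda_le0 P Hc); rewrite L00.
have n2 : (2 <= n)%N.
  case: n P simp fatP disj opt cP touch n1 lam Cl ell => [//|[|m]] // P simp fatP disj opt cP touch _ lam Cl ell.
  exfalso; have [t0 [t01 Pt0]] := touch ord0.
  pose g0 := fun _ : R => T t0.
  have tg0 : is_tour P g0.
    split; first by split => //; apply: continuous_subspaceT; exact: cst_continuous.
    move=> i; rewrite (ord1 i); exists (T t0); split => //.
    by exists 0 => //=; rewrite in_itv /= lexx ler01.
  have := opt.2 g0 tg0; rewrite Hc => h.
  have := le_trans h (const_len (T t0)); rewrite lee_fin => h2.
  by move: Lpos; rewrite ltNge h2.
pose K := (trunc_log 2 n).+1.
have hK1 : (n <= 2 ^ K)%N by apply: ltnW; exact: trunc_log_ltn.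
have hK2 : (2 ^ K <= 2 * n)%N by rewrite expnS leq_mul2l /= trunc_logP // ltnW.
have lb := lambda_bound halpha cP fatP disj touch Hc Lpos hK1.
have npos : 0 < n%:R :> R by rewrite ltr0n.
have lnle : forall x y : R, 0 < x -> x <= y -> ln x <= ln y.
  move=> x y x0 xy; rewrite ler_ln ?posrE //; exact: lt_le_trans xy.
have h1 : ln (n%:R : R) <= ln (n%:R / eps).
  apply: lnle => //; rewrite ler_pdivlMr // ger_pMr //; exact: ltW.
have h2 : ln (2 : R) <= ln (n%:R : R) by apply: lnle => //; rewrite ler_nat.
have h3 : K%:R * ln (2 : R) <= ln (2 : R) + ln (n%:R : R).
  rewrite -lnM ?posrE // mulr_natl -lnXn //; apply: lnle; first exact: exprn_gt0.
  by rewrite -natrX -natrM ler_nat.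
rewrite /lam; move: lb; set lm := lambda_in P (bbox T) => lb.
rewrite mulrAC ler_pdivrMr //.
set l := ln (n%:R / eps) in h1 ell *; set t := ln (2 : R) in l2 h2 h3 *.
set a := alpha^-1 in a0 den lb *.
have aL : 0 <= a * L by rewrite mulr_ge0 // ltW.
have lb' : t * lm <= t * (2 * L + K%:R * (72 * L * a)) by rewrite ler_wpM2l // ltW.
nra.
Qed.
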